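(* Let $Q$ be an equivariantly supported quantal frame with base locale $A$. The following conditions are equivalent: (1) $Q\cong R(Q)\otimes_{T(Q)}L(Q)$ in the category $\mathbf{Frm}$ of frames. (2) For each frame $S$ and frame homomorphisms $h:R(Q)\to S$ and $k:L(Q)\to S$ whose restrictions to $T(Q)$ coincide, there is a unique frame homomorphism $t:Q\to S$ whose restriction to $R(Q)$ is $h$ and whose restriction to $L(Q)$ is $k$. (3) The triple $(Q,\ a\mapsto a\triangleright 1_Q,\ a\mapsto 1_Q\triangleleft a)$ is the cokernel pair in $\mathbf{Frm}$ of the inclusion $E\to A$, where $E=\{a\in A\mid a\triangleright 1_Q=1_Q\triangleleft a\}$.
   Context: For a locale (frame) $A$, an $A$-$A$-bimodule is a sup-lattice $M$ with actions $(a,m)\mapsto a\triangleright m$ and $(m,a)\mapsto m\triangleleft a$ preserving joins in each variable, with $1_A\triangleright m=m$, $(a\wedge b)\triangleright m=a\triangleright(b\triangleright m)$, $m\triangleleft1_A=m$, $m\triangleleft(a\wedge b)=(m\triangleleft a)\triangleleft b$, $(a\triangleright m)\triangleleft b=a\triangleright(m\triangleleft b)$. An $A$-$A$-quantale is such a $Q$ with an associative multiplication preserving joins in each variable and $(a\triangleright x)y=a\triangleright(xy)$, $(x\triangleleft a)y=x(a\triangleright y)$, $(xy)\triangleleft a=x(y\triangleleft a)$; involutive if there is a join-preserving $x\mapsto x^*$ with $x^{**}=x$, $(xy)^*=y^*x^*$, $(a\triangleright(x\triangleleft b))^*=b\triangleright(x^*\triangleleft a)$. $1_Q$ is the top of $Q$.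 A support is a join-preserving $\varsigma:Q\to A$ with $\varsigma(1_Q)=1_A$, $\varsigma(x)\triangleright y\le xx^*y$, $\varsigma(x)\triangleright x=x$; it is equivariant if $\varsigma(a\triangleright x)=a\wedge\varsigma(x)$. An equivariantly supported quantal frame is an involutive $A$-$A$-quantale $Q$ with an equivariant support whose lattice is a frame and such that $(a\triangleright x)\wedge y=a\triangleright(x\wedge y)$ and $(x\triangleleft a)\wedge y=(x\wedge y)\triangleleft a$. $R(Q)=\{x\in Q\mid x1_Q\le x\}$ (right-sided elements), $L(Q)=\{x^*\mid x\in R(Q)\}$, $T(Q)=R(Q)\cap L(Q)$; these are frames, and $R(Q)\otimes_{T(Q)}L(Q)$ denotes the pushout in $\mathbf{Frm}$ of the inclusions $T(Q)\to R(Q)$ and $T(Q)\to L(Q)$. *)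

(* Defs.v *)
From Stdlib Require Import ProofIrrelevance.

Set Implicit Arguments.

Definition img {T U : Type} (f : T -> U) (X : T -> Prop) : U -> Prop :=
  fun y => exists x, X x /\ y = f x.

Record Frame := {
  fcar :> Type;
  fle : fcar -> fcar -> Prop;
  fsup : (fcar -> Prop) -> fcar;
  fmeet : fcar -> fcar -> fcar;
  ftop : fcar;
  fle_refl : forall x, fle x x;
  fle_trans : forall x y z, fle x y -> fle y z -> fle x z;
  fle_antisym : forall x y, fle x y -> fle y x -> x = y;
  fsup_ub : forall X x, X x -> fle x (fsup X);
  fsup_least : forall X y, (forall x, X x -> fle x y) -> fle (fsup X) y;
  fmeet_lb1 : forall x y, fle (fmeet x y) x;
  fmeet_lb2 : forall x y, fle (fmeet x y) y;
  fmeet_glb : forall x y z, fle z x -> fle z y -> fle z (fmeet x y);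
  ftop_max : forall x, fle x ftop;
  fdistr : forall a X, fmeet a (fsup X) = fsup (img (fmeet a) X)
}.

Arguments fle {f}.
Arguments fsup {f}.
Arguments fmeet {f}.
Arguments ftop {f}.

Definition frame_hom (F G : Frame) (f : F -> G) : Prop :=
  f ftop = ftop /\
  (forall x y, f (fmeet x y) = fmeet (f x) (f y)) /\
  (forall X, f (fsup X) = fsup (img f X)).

Arguments frame_hom {F G} f.

Definition frame_iso (F G : Frame) (f : F -> G) : Prop :=
  frame_hom f /\
  exists g : G -> F, frame_hom g /\ (forall x, g (f x) = x) /\ (forall y, f (g y) = y).

Arguments frame_iso {F G} f.

Definition pushout_univ (T R L P : Frame) (a : T -> R) (b : T -> L)
  (i : R -> P) (j : L -> P) : Prop :=
  forall (S : Frame) (h : R -> S) (k : L -> S),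
    frame_hom h -> frame_hom k -> (forall t, h (a t) = k (b t)) ->
    exists t : P -> S,
      (frame_hom t /\ (forall x, t (i x) = h x) /\ (forall y, t (j y) = k y)) /\
      (forall t' : P -> S,
         frame_hom t' -> (forall x, t' (i x) = h x) -> (forall y, t' (j y) = k y) ->
         forall z, t' z = t z).

Arguments pushout_univ {T R L P} a b i j.

Definition is_pushout (T R L P : Frame) (a : T -> R) (b : T -> L)
  (i : R -> P) (j : L -> P) : Prop :=
  frame_hom i /\ frame_hom j /\ (forall t, i (a t) = j (b t)) /\
  pushout_univ a b i j.

Arguments is_pushout {T R L P} a b i j.

Lemma fsup_ext (F : Frame) (X Y : F -> Prop) :
  (forall y, X y <-> Y y) -> fsup X = fsup Y.
Proof.
  intros H; apply fle_antisym; apply fsup_least; intros x Hx;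
  apply fsup_ub; apply H; exact Hx.
Qed.

Section SubFrame.
Variable F : Frame.
Variable P : F -> Prop.
Hypothesis Psup : forall X, (forall x, X x -> P x) -> P (fsup X).
Hypothesis Pmeet : forall x y, P x -> P y -> P (fmeet x y).
Hypothesis Ptop : P ftop.

Definition sub_car := { x : F | P x }.
Definition sub_le (x y : sub_car) := fle (proj1_sig x) (proj1_sig y).
Definition sub_sup (X : sub_car -> Prop) : sub_car :=
  exist _ (fsup (img (@proj1_sig _ _) X))
    (Psup _ (fun y Hy => match Hy with ex_intro _ x (conj _ e) =>
             eq_ind_r P (proj2_sig x) e end)).
Definition sub_meet (x y : sub_car) : sub_car :=
  exist _ (fmeet (proj1_sig x) (proj1_sig y)) (Pmeet (proj2_sig x) (proj2_sig y)).
Definition sub_top : sub_car := exist _ ftop Ptop.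

Lemma sub_eq (x y : sub_car) : proj1_sig x = proj1_sig y -> x = y.
Proof.
  destruct x as [x px], y as [y py]; simpl; intros e; subst y.
  f_equal; apply proof_irrelevance.
Qed.

Definition SubFrame : Frame.
Proof.
  refine (@Build_Frame sub_car sub_le sub_sup sub_meet sub_top _ _ _ _ _ _ _ _ _ _);
  unfold sub_le, sub_sup, sub_meet, sub_top; simpl.
  - intros; apply fle_refl.
  - intros x y z; apply fle_trans.
  - intros x y H1 H2; apply sub_eq; apply fle_antisym; assumption.
  - intros X x Hx; apply fsup_ub; exists x; split; auto.
  - intros X y H; apply fsup_least; intros z [x [Hx ->]]; apply H; exact Hx.
  - intros; apply fmeet_lb1.
  - intros; apply fmeet_lb2.
  - intros; apply fmeet_glb; assumption.
  - intros; apply ftop_max.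
  - intros a X; apply sub_eq; simpl. rewrite fdistr. apply fsup_ext.
    intros y; split.
    + intros [z [[x [Hx ->]] ->]]. exists (sub_meet a x); split.
      * exists x; split; auto.
      * reflexivity.
    + intros [z [[x [Hx ->]] ->]]. exists (proj1_sig x); split.
      * exists x; split; auto.
      * reflexivity.
Defined.
End SubFrame.

Record EqSuppQuantalFrame (A : Frame) := {
  Qf :> Frame;
  lact : A -> Qf -> Qf;
  ract : Qf -> A -> Qf;
  qmul : Qf -> Qf -> Qf;
  qinv : Qf -> Qf;
  supp : Qf -> A;
  lact_supl : forall X m, lact (fsup X) m = fsup (img (fun a => lact a m) X);
  lact_supr : forall a X, lact a (fsup X) = fsup (img (lact a) X);
  ract_supl : forall X a, ract (fsup X) a = fsup (img (fun m => ract m a) X);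
  ract_supr : forall m X, ract m (fsup X) = fsup (img (ract m) X);
  lact_top : forall m, lact ftop m = m;
  lact_meet : forall a b m, lact (fmeet a b) m = lact a (lact b m);
  ract_top : forall m, ract m ftop = m;
  ract_meet : forall m a b, ract m (fmeet a b) = ract (ract m a) b;
  act_assoc : forall a m b, ract (lact a m) b = lact a (ract m b);
  qmul_assoc : forall x y z, qmul (qmul x y) z = qmul x (qmul y z);
  qmul_supl : forall X y, qmul (fsup X) y = fsup (img (fun x => qmul x y) X);
  qmul_supr : forall x Y, qmul x (fsup Y) = fsup (img (qmul x) Y);
  qmul_lact : forall a x y, qmul (lact a x) y = lact a (qmul x y);
  qmul_ract_lact : forall x a y, qmul (ract x a) y = qmul x (lact a y);
  qmul_ract : forall x y a, ract (qmul x y) a = qmul x (ract y a);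
  qinv_sup : forall X, qinv (fsup X) = fsup (img qinv X);
  qinv_inv : forall x, qinv (qinv x) = x;
  qinv_mul : forall x y, qinv (qmul x y) = qmul (qinv y) (qinv x);
  qinv_act : forall a x b, qinv (lact a (ract x b)) = lact b (ract (qinv x) a);
  supp_sup : forall X, supp (fsup X) = fsup (img supp X);
  supp_top : supp ftop = ftop;
  supp_le : forall x y, fle (lact (supp x) y) (qmul (qmul x (qinv x)) y);
  supp_fix : forall x, lact (supp x) x = x;
  supp_equiv : forall a x, supp (lact a x) = fmeet a (supp x);
  lact_meet_compat : forall a x y, fmeet (lact a x) y = lact a (fmeet x y);
  ract_meet_compat : forall a x y, fmeet (ract x a) y = ract (fmeet x y) a
}.

Arguments lact {A _}.
Arguments ract {A _}.
Arguments qmul {A _}.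
Arguments qinv {A _}.
Arguments supp {A _}.

Section RLT.
Variable A : Frame.
Variable Q : EqSuppQuantalFrame A.

Definition Rpred (x : Q) : Prop := fle (qmul x ftop) x.
Definition Lpred (y : Q) : Prop := exists x, Rpred x /\ y = qinv x.
Definition Tpred (x : Q) : Prop := Rpred x /\ Lpred x.

Lemma qmul_mono_l (x x' y : Q) : fle x x' -> fle (qmul x y) (qmul x' y).
Proof.
  intros H.
  assert (E : x' = fsup (fun z => z = x \/ z = x')).
  { apply fle_antisym.
    - apply fsup_ub; right; reflexivity.
    - apply fsup_least; intros z [-> | ->]; [exact H | apply fle_refl]. }
  rewrite E, qmul_supl. apply fsup_ub. exists x; split; auto.
Qed.

Lemma qinv_mono (x y : Q) : fle x y -> fle (qinv x) (qinv y).
Proof.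
  intros H.
  assert (E : y = fsup (fun z => z = x \/ z = y)).
  { apply fle_antisym.
    - apply fsup_ub; right; reflexivity.
    - apply fsup_least; intros z [-> | ->]; [exact H | apply fle_refl]. }
  rewrite E, qinv_sup. apply fsup_ub. exists x; split; auto.
Qed.

Lemma qinv_le (x y : Q) : fle (qinv x) y <-> fle x (qinv y).
Proof.
  split; intros H.
  - rewrite <- (qinv_inv Q x). apply qinv_mono; exact H.
  - rewrite <- (qinv_inv Q y). apply qinv_mono; exact H.
Qed.

Lemma qinv_meet (x y : Q) : qinv (fmeet x y) = fmeet (qinv x) (qinv y).
Proof.
  apply fle_antisym.
  - apply fmeet_glb; apply qinv_mono; [apply fmeet_lb1 | apply fmeet_lb2].
  - apply qinv_le. apply fmeet_glb; apply qinv_le;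
      [apply fmeet_lb1 | apply fmeet_lb2].
Qed.

Lemma qinv_top : qinv (ftop : Q) = ftop.
Proof.
  apply fle_antisym; [apply ftop_max|]. apply qinv_le. apply ftop_max.
Qed.

Lemma Rsup : forall X, (forall x, X x -> Rpred x) -> Rpred (fsup X).
Proof.
  intros X HX; unfold Rpred. rewrite qmul_supl. apply fsup_least.
  intros z [x [Hx ->]]. eapply fle_trans; [apply HX; exact Hx|].
  apply fsup_ub; exact Hx.
Qed.

Lemma Rmeet : forall x y, Rpred x -> Rpred y -> Rpred (fmeet x y).
Proof.
  intros x y Hx Hy; unfold Rpred in *. apply fmeet_glb.
  - eapply fle_trans; [apply qmul_mono_l, fmeet_lb1 | exact Hx].
  - eapply fle_trans; [apply qmul_mono_l, fmeet_lb2 | exact Hy].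
Qed.

Lemma Rtop : Rpred ftop.
Proof. unfold Rpred; apply ftop_max. Qed.

Lemma Lsup : forall X, (forall x, X x -> Lpred x) -> Lpred (fsup X).
Proof.
  intros X HX. exists (fsup (img qinv X)). split.
  - apply Rsup. intros z [x [Hx ->]]. destruct (HX x Hx) as [w [Hw ->]].
    rewrite qinv_inv; exact Hw.
  - rewrite qinv_sup. apply fsup_ext. intros y; split.
    + intros Hy. exists (qinv y); split; [exists y; split; auto|].
      rewrite qinv_inv; reflexivity.
    + intros [z [[x [Hx ->]] ->]]. rewrite qinv_inv; exact Hx.
Qed.

Lemma Lmeet : forall x y, Lpred x -> Lpred y -> Lpred (fmeet x y).
Proof.
  intros x y [u [Hu ->]] [v [Hv ->]]. exists (fmeet u v); split.
  - apply Rmeet; assumption.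
  - symmetry; apply qinv_meet.
Qed.

Lemma Ltop : Lpred ftop.
Proof. exists ftop; split; [apply Rtop | symmetry; apply qinv_top]. Qed.

Lemma Tsup : forall X, (forall x, X x -> Tpred x) -> Tpred (fsup X).
Proof.
  intros X HX; split; [apply Rsup | apply Lsup]; intros x Hx; apply HX; exact Hx.
Qed.

Lemma Tmeet : forall x y, Tpred x -> Tpred y -> Tpred (fmeet x y).
Proof.
  intros x y [? ?] [? ?]; split; [apply Rmeet | apply Lmeet]; assumption.
Qed.

Lemma Ttop : Tpred ftop.
Proof. split; [apply Rtop | apply Ltop]. Qed.

Definition RQ : Frame := @SubFrame _ _ Rsup Rmeet Rtop.
Definition LQ : Frame := @SubFrame _ _ Lsup Lmeet Ltop.
Definition TQ : Frame := @SubFrame _ _ Tsup Tmeet Ttop.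

Definition incTR (t : TQ) : RQ :=
  exist Rpred (proj1_sig t) (proj1 (proj2_sig t)).
Definition incTL (t : TQ) : LQ :=
  exist Lpred (proj1_sig t) (proj2 (proj2_sig t)).
Definition incRQ (x : RQ) : Q := proj1_sig x.
Definition incLQ (y : LQ) : Q := proj1_sig y.

Definition Epred (a : A) : Prop := lact a (ftop : Q) = ract (ftop : Q) a.

Lemma Esup : forall X, (forall x, X x -> Epred x) -> Epred (fsup X).
Proof.
  intros X HX; unfold Epred. rewrite lact_supl, ract_supr. apply fsup_ext.
  intros y; split; intros [a [Ha ->]]; exists a; split; auto;
    rewrite (HX a Ha); reflexivity.
Qed.

Lemma Emeet : forall a b, Epred a -> Epred b -> Epred (fmeet a b).
Proof.
  intros a b Ha Hb; unfold Epred in *.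
  rewrite lact_meet, ract_meet, Hb, <- act_assoc, Ha. reflexivity.
Qed.

Lemma Etop : Epred ftop.
Proof. unfold Epred; rewrite lact_top, ract_top; reflexivity. Qed.

Definition EA : Frame := @SubFrame _ _ Esup Emeet Etop.
Definition incEA (e : EA) : A := proj1_sig e.

Definition uQ (a : A) : Q := lact a ftop.
Definition vQ (a : A) : Q := ract ftop a.

End RLT.

Arguments RQ {A} Q.
Arguments LQ {A} Q.
Arguments TQ {A} Q.
Arguments EA {A} Q.
Arguments incTR {A Q}.
Arguments incTL {A Q}.
Arguments incRQ {A Q}.
Arguments incLQ {A Q}.
Arguments incEA {A Q}.
Arguments uQ {A} Q a.
Arguments vQ {A} Q a.

(* Main.v *)
Require Import Defs.
From Stdlib Require Import ProofIrrelevance Setoid.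

Lemma fmeet_top_l (F : Frame) (x : F) : fmeet ftop x = x.
Proof. apply fle_antisym; [apply fmeet_lb2|apply fmeet_glb; [apply ftop_max|apply fle_refl]]. Qed.
Lemma fmeet_top_r (F : Frame) (x : F) : fmeet x ftop = x.
Proof. apply fle_antisym; [apply fmeet_lb1|apply fmeet_glb; [apply fle_refl|apply ftop_max]]. Qed.

Lemma sup_mono (F G : Frame) (f : F -> G) :
  (forall X, f (fsup X) = fsup (img f X)) -> forall x y, fle x y -> fle (f x) (f y).
Proof.
  intros Hf x y H.
  assert (E : y = fsup (fun z => z = x \/ z = y)).
  { apply fle_antisym.
    - apply fsup_ub; right; reflexivity.
    - apply fsup_least; intros z [-> | ->]; [exact H | apply fle_refl]. }
  rewrite E, Hf. apply fsup_ub. exists x; split; auto.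
Qed.

Lemma img_comp (F G H : Frame) (f : F -> G) (g : G -> H) X :
  fsup (img g (img f X)) = fsup (img (fun x => g (f x)) X).
Proof.
  apply fsup_ext; intros y; split.
  - intros [z [[x [Hx ->]] ->]]; exists x; auto.
  - intros [x [Hx ->]]; exists (f x); split; [exists x; auto|reflexivity].
Qed.

Lemma hom_comp (F G H : Frame) (f : F -> G) (g : G -> H) :
  frame_hom f -> frame_hom g -> frame_hom (fun x => g (f x)).
Proof.
  intros [f1 [f2 f3]] [g1 [g2 g3]]; split; [|split].
  - rewrite f1; exact g1.
  - intros; rewrite f2; apply g2.
  - intros X; rewrite f3, g3; apply img_comp.
Qed.

Arguments hom_comp {F G H f g}.
Arguments img_comp {F G H}.
Arguments sup_mono {F G} f.
Set Implicit Arguments.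
Section Q.
Variable A : Frame.
Variable Q : EqSuppQuantalFrame A.

Lemma lact_mono a (x y : Q) : fle x y -> fle (lact a x) (lact a y).
Proof. apply sup_mono; intros; apply lact_supr. Qed.
Lemma lact_mono_l (m : Q) a b : fle a b -> fle (lact a m) (lact b m).
Proof. apply (sup_mono (fun a => lact a m)); intros; apply lact_supl. Qed.
Lemma qmul_mono_r (x y y' : Q) : fle y y' -> fle (qmul x y) (qmul x y').
Proof. apply sup_mono; intros; apply qmul_supr. Qed.
Lemma supp_mono (x y : Q) : fle x y -> fle (supp x) (supp y).
Proof. apply sup_mono; intros; apply supp_sup. Qed.

Lemma K1 (x : Q) : qmul x ftop = lact (supp x) ftop.
Proof.
  apply fle_antisym.
  - rewrite <- (supp_fix Q x) at 1. rewrite qmul_lact.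
    apply lact_mono, ftop_max.
  - eapply fle_trans; [apply supp_le|]. rewrite qmul_assoc.
    apply qmul_mono_r, ftop_max.
Qed.

Lemma K2 (x : Q) : fle x (qmul x ftop).
Proof.
  rewrite <- (supp_fix Q x) at 1. eapply fle_trans; [apply supp_le|].
  rewrite qmul_assoc. apply qmul_mono_r, ftop_max.
Qed.

Lemma R_eq (x : Q) : Rpred Q x -> x = uQ Q (supp x).
Proof.
  intros H. unfold uQ. rewrite <- K1. apply fle_antisym; [apply K2|exact H].
Qed.

Lemma K3 a : supp (uQ Q a) = a.
Proof. unfold uQ. rewrite supp_equiv, supp_top. apply fmeet_top_r. Qed.

Lemma K4 a : Rpred Q (uQ Q a).
Proof. unfold Rpred, uQ. rewrite qmul_lact. apply lact_mono, ftop_max. Qed.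

Lemma K5 a : qinv (uQ Q a) = vQ Q a.
Proof.
  unfold uQ, vQ. rewrite <- (ract_top Q ftop) at 1. rewrite qinv_act, qinv_top, lact_top.
  reflexivity.
Qed.

Lemma K5' a : qinv (vQ Q a) = uQ Q a.
Proof. rewrite <- K5, qinv_inv. reflexivity. Qed.

Lemma uQ_hom : frame_hom (uQ Q).
Proof.
  split; [|split]; unfold uQ.
  - apply lact_top.
  - intros a b. rewrite lact_meet, lact_meet_compat, fmeet_top_l. reflexivity.
  - intros X. apply lact_supl.
Qed.

Lemma qinv_hom : frame_hom (@qinv A Q).
Proof.
  split; [|split].
  - apply qinv_top.
  - apply qinv_meet.
  - apply qinv_sup.
Qed.

Lemma vQ_hom : frame_hom (vQ Q).
Proof.
  destruct (hom_comp uQ_hom qinv_hom) as [h1 [h2 h3]].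
  split; [|split].
  - rewrite <- K5; exact h1.
  - intros; rewrite <- !K5; apply h2.
  - intros X; rewrite <- K5, h3. apply fsup_ext; intros y; split;
      intros [x [Hx ->]]; exists x; split; auto; rewrite K5; reflexivity.
Qed.

Lemma K9 b : fle b (supp (vQ Q b)).
Proof.
  assert (H : fle (uQ Q b) (uQ Q (supp (vQ Q b)))).
  { set (y := uQ Q b).
    eapply fle_trans with (y := qmul ftop y).
    - rewrite <- (supp_fix Q y) at 1. eapply fle_trans; [apply supp_le|].
      apply qmul_mono_l, ftop_max.
    - unfold y, uQ at 1. rewrite <- qmul_ract_lact. unfold uQ. rewrite <- K1.
      apply fle_refl. }
  apply supp_mono in H. rewrite !K3 in H. exact H.
Qed.

Lemma K10 a b : uQ Q a = vQ Q b -> a = b.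
Proof.
  intros E. apply fle_antisym.
  - pose proof (K9 a) as H. rewrite <- K5, E, K5', K3 in H. exact H.
  - pose proof (K9 b) as H. rewrite <- E, K3 in H. exact H.
Qed.

Lemma supp_meet_R (x y : Q) : Rpred Q x -> Rpred Q y -> supp (fmeet x y) = fmeet (supp x) (supp y).
Proof.
  intros Hx Hy. pose proof (R_eq x Hx) as Ex; pose proof (R_eq y Hy) as Ey.
  transitivity (supp (fmeet (uQ Q (supp x)) (uQ Q (supp y)))).
  - rewrite <- Ex, <- Ey; reflexivity.
  - destruct uQ_hom as [_ [Hm _]]. rewrite <- Hm, K3. reflexivity.
Qed.

Definition rA (a : A) : RQ Q := exist (Rpred Q) (uQ Q a) (K4 a).
Definition lA (a : A) : LQ Q :=
  exist (Lpred Q) (vQ Q a) (ex_intro _ (uQ Q a) (conj (K4 a) (eq_sym (K5 a)))).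
Definition rinv (r : RQ Q) : A := supp (proj1_sig r).
Definition linv (l : LQ Q) : A := supp (qinv (proj1_sig l)).

Lemma rA_hom : frame_hom rA.
Proof.
  destruct uQ_hom as [h1 [h2 h3]].
  split; [|split].
  - apply sub_eq; simpl. exact h1.
  - intros a b; apply sub_eq; simpl. apply h2.
  - intros X; apply sub_eq; simpl. rewrite h3. symmetry. apply (img_comp rA (fun r : RQ Q => proj1_sig r : Q)).
Qed.

Lemma lA_hom : frame_hom lA.
Proof.
  destruct vQ_hom as [h1 [h2 h3]].
  split; [|split].
  - apply sub_eq; simpl. exact h1.
  - intros a b; apply sub_eq; simpl. apply h2.
  - intros X; apply sub_eq; simpl. rewrite h3. symmetry. apply (img_comp lA (fun r : LQ Q => proj1_sig r : Q)).
Qed.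

Lemma rinv_hom : frame_hom rinv.
Proof.
  split; [|split]; unfold rinv; simpl.
  - apply supp_top.
  - intros [x Hx] [y Hy]; simpl. apply supp_meet_R; assumption.
  - intros X. rewrite supp_sup. apply (img_comp (fun r : RQ Q => proj1_sig r : Q) supp).
Qed.

Lemma L_R (y : Q) : Lpred Q y -> Rpred Q (qinv y).
Proof. intros [x [Hx ->]]. rewrite qinv_inv. exact Hx. Qed.

Lemma linv_hom : frame_hom linv.
Proof.
  split; [|split]; unfold linv; simpl.
  - rewrite qinv_top. apply supp_top.
  - intros [x Hx] [y Hy]; simpl. rewrite qinv_meet. apply supp_meet_R; apply L_R; assumption.
  - intros X. rewrite qinv_sup, supp_sup, img_comp.
    apply (img_comp (fun r : LQ Q => proj1_sig r : Q) (fun x => supp (qinv x))).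
Qed.

Lemma rA_rinv r : rA (rinv r) = r.
Proof. apply sub_eq; simpl. destruct r as [x Hx]; simpl. symmetry; apply R_eq; exact Hx. Qed.

Lemma lA_linv l : lA (linv l) = l.
Proof.
  apply sub_eq; simpl. destruct l as [x Hx]; simpl. unfold linv; simpl.
  rewrite <- K5, <- (R_eq _ (L_R Hx)). apply qinv_inv.
Qed.

Lemma rinv_rA a : rinv (rA a) = a.
Proof. apply K3. Qed.
Lemma linv_lA a : linv (lA a) = a.
Proof. unfold linv; simpl. rewrite K5'. apply K3. Qed.

Lemma T_E (t : TQ Q) : rinv (incTR t) = linv (incTL t) /\ Epred Q (rinv (incTR t)).
Proof.
  destruct t as [x [Hr Hl]]. unfold rinv, linv, incTR, incTL; simpl.
  pose proof (R_eq _ Hr) as E1. pose proof (R_eq _ (L_R Hl)) as E2.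
  assert (E3 : x = vQ Q (supp (qinv x))).
  { rewrite <- K5, <- E2, qinv_inv. reflexivity. }
  assert (Eab : supp x = supp (qinv x)).
  { apply K10. rewrite <- E1. exact E3. }
  split; [exact Eab|]. unfold Epred. fold (uQ Q (supp x)). fold (vQ Q (supp x)).
  rewrite <- E1, Eab, <- E3. reflexivity.
Qed.

Definition tE (e : EA Q) : TQ Q :=
  exist (Tpred Q) (uQ Q (incEA e))
    (conj (K4 _) (ex_intro _ (uQ Q (incEA e)) (conj (K4 _)
       (eq_trans (proj2_sig e) (eq_sym (K5 _)))))).

Lemma tE_R e : incTR (tE e) = rA (incEA e).
Proof. apply sub_eq; reflexivity. Qed.
Lemma tE_L e : incTL (tE e) = lA (incEA e).
Proof. apply sub_eq; simpl. exact (proj2_sig e). Qed.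

Lemma incR_eq (x : RQ Q) : incRQ x = uQ Q (rinv x).
Proof. transitivity (incRQ (rA (rinv x))); [rewrite rA_rinv; reflexivity|reflexivity]. Qed.
Lemma incL_eq (x : LQ Q) : incLQ x = vQ Q (linv x).
Proof. transitivity (incLQ (lA (linv x))); [rewrite lA_linv; reflexivity|reflexivity]. Qed.
End Q.

Theorem theorem4p6 (A : Frame) (Q : EqSuppQuantalFrame A) :
  ((exists (P : Frame) (i : RQ Q -> P) (j : LQ Q -> P),
      is_pushout (@incTR A Q) (@incTL A Q) i j /\
      exists phi : P -> Q, frame_iso phi /\
        (forall x, phi (i x) = incRQ x) /\ (forall y, phi (j y) = incLQ y))
   <->
   pushout_univ (@incTR A Q) (@incTL A Q) (@incRQ A Q) (@incLQ A Q))
  /\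
  (pushout_univ (@incTR A Q) (@incTL A Q) (@incRQ A Q) (@incLQ A Q)
   <->
   is_pushout (@incEA A Q) (@incEA A Q) (uQ Q) (vQ Q)).
Proof.
  split; split.
  - intros [P [i [j [[Hi [Hj [Hc Hu]]] [phi [[Hphi [g [Hg [Hgp Hpg]]]] [Hpi Hpj]]]]]]].
    intros S h k Hh Hk Hhk.
    destruct (Hu S h k Hh Hk Hhk) as [t0 [[Ht0 [Ht0i Ht0j]] Hun]].
    exists (fun z => t0 (g z)). split; [split; [apply (hom_comp Hg Ht0) | split]|].
    + intros x. rewrite <- Hpi, Hgp. apply Ht0i.
    + intros x. rewrite <- Hpj, Hgp. apply Ht0j.
    + intros t' Ht' H1 H2 z.
      transitivity (t' (phi (g z))); [rewrite Hpg; reflexivity|].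
      apply (Hun (fun p => t' (phi p))).
      * apply (hom_comp Hphi Ht').
      * intros x; rewrite Hpi; apply H1.
      * intros x; rewrite Hpj; apply H2.
  - intros Hu. exists (Qf Q), incRQ, incLQ. split.
    + split; [|split; [|split]].
      * split; [reflexivity|split; reflexivity].
      * split; [reflexivity|split; reflexivity].
      * intros; reflexivity.
      * exact Hu.
    + exists (fun x => x). split; [|split; intros; reflexivity].
      assert (Hid : frame_hom (fun x : Q => x)).
      { split; [reflexivity|split; [reflexivity|]]. intros X; apply fsup_ext.
        intros y; split; [intros Hy; exists y; auto|intros [x [Hx ->]]; exact Hx]. }
      split; [exact Hid|]. exists (fun x => x). split; [exact Hid|split; reflexivity].
  - intros Hu. split; [apply uQ_hom|split; [apply vQ_hom|split]].
    + intros e; exact (proj2_sig e).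
    + intros S h k Hh Hk Hhk.
      destruct (Hu S (fun r => h (rinv r)) (fun l => k (linv l))
                  (hom_comp (rinv_hom Q) Hh) (hom_comp (linv_hom Q) Hk))
        as [t [[Ht [H1 H2]] Hun]].
      * intros tt. destruct (T_E tt) as [E1 E2]. rewrite <- E1.
        exact (Hhk (exist _ _ E2)).
      * exists t. split; [split; [exact Ht|split]|].
        -- intros a. change (uQ Q a) with (incRQ (rA Q a)). rewrite H1, rinv_rA. reflexivity.
        -- intros a. change (vQ Q a) with (incLQ (lA Q a)). rewrite H2, linv_lA. reflexivity.
        -- intros t' Ht' G1 G2 z. apply Hun; auto.
           ++ intros x. rewrite incR_eq. apply G1.
           ++ intros x. rewrite incL_eq. apply G2.
  - intros [Hu1 [Hv1 [Hc Hu]]] S h k Hh Hk Hhk.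
    destruct (Hu S (fun a => h (rA Q a)) (fun a => k (lA Q a))
                (hom_comp (rA_hom Q) Hh) (hom_comp (lA_hom Q) Hk))
      as [t [[Ht [H1 H2]] Hun]].
    + intros e. rewrite <- tE_R, <- tE_L. apply Hhk.
    + exists t. split; [split; [exact Ht|split]|].
      * intros x. rewrite incR_eq, H1, rA_rinv. reflexivity.
      * intros x. rewrite incL_eq, H2, lA_linv. reflexivity.
      * intros t' Ht' G1 G2 z. apply Hun; auto.
        -- intros a. change (uQ Q a) with (incRQ (rA Q a)). apply G1.
        -- intros a. change (vQ Q a) with (incLQ (lA Q a)). apply G2.
Qed.
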